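(* There exists a radial weight $\omega\notin\widehat{\mathcal{D}}$ such that $\widetilde{\omega}$ is a radial weight and $\widetilde{\omega}\in\widehat{\mathcal{D}}$.
   Context: A radial weight is a non-negative $\omega\in L^1([0,1))$, extended to the unit disc by $\omega(z)=\omega(|z|)$, with $\widehat{\omega}(r)=\int_r^1\omega(s)\,ds>0$ for all $0\le r<1$. $\widetilde{\omega}(r)=\frac{\widehat{\omega}(r)}{1-r}$ for $0\le r<1$. A radial weight $\nu$ belongs to $\widehat{\mathcal{D}}$ if there is $C=C(\nu)\ge1$ with $\widehat{\nu}(r)\le C\,\widehat{\nu}\big(\frac{1+r}{2}\big)$ for all $0\le r<1$, where $\widehat\nu(r)=\int_r^1\nu(s)\,ds$. *)

(* Defs.v *)
From Stdlib Require Import Reals Lra.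
Open Scope R_scope.

(* I.e. W r = int_r^1 w(s) ds  (= \widehat{w}(r)). *)
Definition hat_is (w W : R -> R) : Prop :=
  forall r, 0 <= r < 1 ->
    (forall t, r <= t < 1 -> inhabited (Riemann_integrable w r t)) /\
    (forall eps, 0 < eps -> exists d, 0 < d /\
       forall t (pr : Riemann_integrable w r t),
         r <= t -> t < 1 -> 1 - d < t -> Rabs (RiemannInt pr - W r) < eps).

Definition radial_weight (w W : R -> R) : Prop :=
  (forall r, 0 <= r < 1 -> 0 <= w r) /\
  hat_is w W /\
  (forall r, 0 <= r < 1 -> 0 < W r).

(* Doubling class \widehat{D}, expressed through the tail integral W. *)
Definition Dhat (W : R -> R) : Prop :=
  exists C, 1 <= C /\ forall r, 0 <= r < 1 -> W r <= C * W ((1 + r) / 2).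

Definition tilde (W : R -> R) : R -> R := fun r => W r / (1 - r).

(* Main.v *)
From Stdlib Require Import Reals Lra Lia ClassicalEpsilon.
From Coquelicot Require Import Coquelicot.
Require Import Defs.
Open Scope R_scope.

Fixpoint fseq (n : nat) : R := match n with O => 1 | S m => fseq m / 2 ^ (m + 3) end.
Definition dl (n : nat) : R := / 2 ^ (n + 2).
Definition et (n : nat) : R := / (INR n + 2).
Definition w (k : nat) : R :=
  if Nat.even k then fseq (Nat.div2 k) else fseq (Nat.div2 k) * dl (Nat.div2 k).
Definition v (k : nat) : R :=
  if Nat.even k then fseq (Nat.div2 k) else fseq (Nat.div2 k) * (1 - et (Nat.div2 k)).

Lemma w2 n : w (2 * n) = fseq n.
Proof. unfold w. rewrite Nat.even_mul, Nat.div2_double. reflexivity. Qed.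
Lemma w2S n : w (S (2 * n)) = fseq n * dl n.
Proof. unfold w. rewrite Nat.even_succ, Nat.odd_mul, Nat.div2_succ_double. reflexivity. Qed.
Lemma v2 n : v (2 * n) = fseq n.
Proof. unfold v. rewrite Nat.even_mul, Nat.div2_double. reflexivity. Qed.
Lemma v2S n : v (S (2 * n)) = fseq n * (1 - et n).
Proof. unfold v. rewrite Nat.even_succ, Nat.odd_mul, Nat.div2_succ_double. reflexivity. Qed.
Lemma SS2 n : S (S (2 * n)) = (2 * S n)%nat. Proof. lia. Qed.

Lemma fseq_pos n : 0 < fseq n.
Proof. induction n; simpl; [lra|]. apply Rdiv_lt_0_compat; auto. apply pow_lt; lra. Qed.
Lemma fseqS n : fseq (S n) = fseq n * dl n / 2.
Proof. simpl. unfold dl. replace (n+3)%nat with (S (n+2)) by lia. simpl.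
  field. apply pow_nonzero; lra. Qed.
Lemma dl_bnd n : 0 < dl n <= /4.
Proof. unfold dl. split. apply Rinv_0_lt_compat, pow_lt; lra.
  apply Rinv_le_contravar; [lra|]. replace (n+2)%nat with (S (S n)) by lia. simpl.
  assert (1 <= 2 ^ n) by (apply pow_R1_Rle; lra). lra. Qed.
Lemma et_bnd n : 0 < et n <= /2.
Proof. unfold et. assert (0 <= INR n) by apply pos_INR. split.
  apply Rinv_0_lt_compat; lra. apply Rinv_le_contravar; lra. Qed.
Lemma fseq_half n : fseq n <= (/2) ^ n.
Proof. induction n; [simpl; lra|]. rewrite fseqS. simpl (_ ^ S n).
  pose proof (dl_bnd n); pose proof (fseq_pos n).
  apply Rle_trans with (fseq n * /2). nra. assert (0 < /2) by lra. nra. Qed.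

Definition gam (k : nat) : R := (w k - w (S k)) / (v k - v (S k)).

Lemma seq_facts k :
  0 < w (S k) < w k /\ 0 < v (S k) < v k /\ w k <= v k /\
  gam k * ln 2 <= ln (w k / w (S k)).
Proof.
  destruct (Nat.Even_or_Odd k) as [[n ->]|[n ->]].
  - rewrite w2, w2S, v2, v2S. pose proof (fseq_pos n). pose proof (dl_bnd n).
    pose proof (et_bnd n). assert (0 < ln 2) by (pose proof ln_lt_2; lra).
    split; [split; nra|]. split; [split; nra|]. split; [lra|].
    unfold gam. rewrite w2, w2S, v2, v2S.
    replace (fseq n / (fseq n * dl n)) with (2 ^ (n+2)) by (unfold dl; field; split; [apply pow_nonzero; lra|lra]).
    rewrite ln_pow by lra.
    replace ((fseq n - fseq n * dl n) / (fseq n - fseq n * (1 - et n))) with ((1 - dl n) * (INR n + 2)).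
    2:{ unfold et. field. pose proof (pos_INR n). repeat split; lra. }
    rewrite plus_INR. replace (INR 2) with 2 by (simpl; lra).
    assert (0 <= INR n) by apply pos_INR.
    assert (0 <= dl n * (INR n + 2) * ln 2) by (apply Rmult_le_pos; [apply Rmult_le_pos|]; lra).
    nra.
  - replace (2*n+1)%nat with (S (2*n)) by lia. rewrite SS2, w2, w2S, v2, v2S.
    rewrite fseqS. pose proof (fseq_pos n). pose proof (dl_bnd n).
    pose proof (et_bnd n). assert (0 < ln 2) by (pose proof ln_lt_2; lra).
    split; [split; nra|]. split; [split; nra|]. split; [nra|].
    unfold gam. rewrite SS2, w2, w2S, v2, v2S, fseqS.
    replace (fseq n * dl n / (fseq n * dl n / 2)) with 2 by (field; lra).
    replace ((fseq n * dl n - fseq n * dl n / 2) / (fseq n * (1 - et n) - fseq n * dl n / 2))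
      with ((dl n / 2) / ((1 - et n) - dl n / 2)).
    2:{ assert (0 < fseq n * ((1 - et n) - dl n / 2)) by (apply Rmult_lt_0_compat; lra).
        field. repeat split; nra. }
    assert (dl n / 2 / (1 - et n - dl n / 2) <= 1).
    { apply Rmult_le_reg_r with ((1 - et n) - dl n / 2); [lra|].
      unfold Rdiv. rewrite Rmult_assoc, Rinv_l by lra. lra. }
    nra.
Qed.

Lemma gam_even n : (3/4) * (INR n + 2) <= gam (2 * n).
Proof.
  unfold gam. rewrite w2, w2S, v2, v2S. pose proof (fseq_pos n). pose proof (dl_bnd n).
  pose proof (et_bnd n). pose proof (pos_INR n).
  replace ((fseq n - fseq n * dl n) / (fseq n - fseq n * (1 - et n))) with ((1 - dl n) * (INR n + 2)).
  2:{ unfold et. field. repeat split; lra. }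
  nra.
Qed.

Lemma gam_pos k : 0 < gam k.
Proof. destruct (seq_facts k) as [[? ?] [[? ?] _]]. unfold gam.
  apply Rdiv_lt_0_compat; lra. Qed.

Fixpoint lam (k : nat) : R :=
  match k with O => 0 | S j => lam j - ln (w j / w (S j)) / gam j end.
Definition dd (k : nat) : R := exp (lam k).
Definition p (k : nat) : R := 1 - dd k.

Lemma dd_pos k : 0 < dd k. Proof. apply exp_pos. Qed.
Lemma lam_step k : lam (S k) <= lam k - ln 2.
Proof. simpl. destruct (seq_facts k) as [_ [_ [_ H]]]. pose proof (gam_pos k).
  assert (ln 2 <= ln (w k / w (S k)) / gam k).
  { apply Rmult_le_reg_r with (gam k); auto. unfold Rdiv. rewrite Rmult_assoc, Rinv_l by lra. lra. }
  lra. Qed.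
Lemma dd_step k : dd (S k) <= dd k / 2.
Proof. unfold dd. pose proof (lam_step k).
  replace (exp (lam k) / 2) with (exp (lam k - ln 2)).
  2:{ unfold Rminus. rewrite exp_plus, exp_Ropp, exp_ln by lra. reflexivity. }
  destruct (Rle_lt_or_eq_dec _ _ H). left; apply exp_increasing; auto. rewrite e; lra. Qed.
Lemma dd0 : dd 0 = 1. Proof. unfold dd. simpl. apply exp_0. Qed.
Lemma p0 : p 0 = 0. Proof. unfold p. rewrite dd0. lra. Qed.
Lemma p_lt k : p k < p (S k).
Proof. unfold p. pose proof (dd_step k). pose proof (dd_pos k). lra. Qed.
Lemma p_lt1 k : p k < 1. Proof. unfold p. pose proof (dd_pos k). lra. Qed.
Lemma p_mono m n : (m < n)%nat -> p m < p n.
Proof. induction 1. apply p_lt. pose proof (p_lt m0). lra. Qed.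
Lemma p_le m n : (m <= n)%nat -> p m <= p n.
Proof. intros H. destruct (Nat.eq_dec m n). subst; lra. left; apply p_mono; lia. Qed.
Lemma p_nonneg k : 0 <= p k. Proof. rewrite <- p0. apply p_le. lia. Qed.
Lemma dd_half k : dd k <= (/2) ^ k.
Proof. induction k. rewrite dd0; simpl; lra. pose proof (dd_step k). simpl. lra. Qed.
Lemma p_unb a : a < 1 -> exists k, a < p k.
Proof. intros Ha. destruct (pow_lt_1_zero (/2) ltac:(rewrite Rabs_pos_eq; lra) (1 - a) ltac:(lra)) as [N HN].
  exists N. specialize (HN N (Nat.le_refl _)). rewrite Rabs_pos_eq in HN by (apply pow_le; lra).
  pose proof (dd_half N). unfold p. lra. Qed.
Lemma piece_exists a : 0 <= a < 1 -> exists n, p n <= a < p (S n).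
Proof. intros Ha. destruct (p_unb a) as [N HN]; [lra|].
  revert HN. induction N; intros HN. rewrite p0 in HN; lra.
  destruct (Rlt_or_le a (p N)). auto. exists N; split; auto. Qed.
Lemma piece_unique a j n : p j <= a < p (S j) -> p n <= a <= p (S n) ->
  j = n \/ (j = S n /\ a = p (S n)).
Proof. intros [H1 H2] [H3 H4].
  destruct (Compare_dec.lt_eq_lt_dec j n) as [[Hl|He]|Hg]; auto.
  - assert (p (S j) <= p n) by (apply p_le; lia). lra.
  - destruct (Nat.eq_dec j (S n)). subst. right. split; auto. lra.
    assert (p (S (S n)) <= p j) by (apply p_le; lia). pose proof (p_lt (S n)). lra.
Qed.

Definition idx (a : R) : nat := epsilon (inhabits 0%nat) (fun n => p n <= a < p (S n)).
Lemma idx_spec a : 0 <= a < 1 -> p (idx a) <= a < p (S (idx a)).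
Proof. intros H. unfold idx. apply epsilon_spec. apply piece_exists; auto. Qed.
Lemma idx_in a k : p k <= a <= p (S k) -> idx a = k \/ (idx a = S k /\ a = p (S k)).
Proof. intros H. apply piece_unique; auto. apply idx_spec. pose proof (p_nonneg k). pose proof (p_lt1 (S k)). lra. Qed.
Lemma idx_int a k : p k < a < p (S k) -> idx a = k.
Proof. intros H. destruct (idx_in a k) as [|[_ ?]]; auto; lra. Qed.

Definition Wk (k : nat) (r : R) : R := w k * exp (gam k * (ln (1 - r) - lam k)).
Definition Vk (k : nat) (r : R) : R := v k + (Wk k r - w k) / gam k.
Definition Wf (r : R) : R := Wk (idx r) r.
Definition Vf (r : R) : R := Vk (idx r) r.
Definition om (r : R) : R := gam (idx r) * Wf r / (1 - r).

Lemma ln_1p k : ln (1 - p k) = lam k.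
Proof. unfold p, dd. replace (1 - (1 - exp (lam k))) with (exp (lam k)) by ring. apply ln_exp. Qed.
Lemma Wk_left k : Wk k (p k) = w k.
Proof. unfold Wk. rewrite ln_1p. replace (gam k * (lam k - lam k)) with 0 by ring. rewrite exp_0; ring. Qed.
Lemma Wk_right k : Wk k (p (S k)) = w (S k).
Proof. unfold Wk. rewrite ln_1p. simpl lam. destruct (seq_facts k) as [[? ?] _]. pose proof (gam_pos k).
  replace (gam k * (lam k - ln (w k / w (S k)) / gam k - lam k)) with (- ln (w k / w (S k))) by (field; lra).
  rewrite exp_Ropp, exp_ln by (apply Rdiv_lt_0_compat; lra). field. lra. Qed.
Lemma Vk_left k : Vk k (p k) = v k.
Proof. unfold Vk. rewrite Wk_left. pose proof (gam_pos k). field. lra. Qed.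
Lemma Vk_right k : Vk k (p (S k)) = v (S k).
Proof. unfold Vk. rewrite Wk_right. pose proof (gam_pos k). destruct (seq_facts k) as [[? ?] [[? ?] _]].
  unfold gam. field. lra. Qed.
Lemma Wf_eq a k : p k <= a <= p (S k) -> Wf a = Wk k a.
Proof. intros H. unfold Wf. destruct (idx_in a k H) as [->|[-> ->]]; auto.
  rewrite Wk_left, Wk_right; auto. Qed.
Lemma Vf_eq a k : p k <= a <= p (S k) -> Vf a = Vk k a.
Proof. intros H. unfold Vf. destruct (idx_in a k H) as [->|[-> ->]]; auto.
  rewrite Vk_left, Vk_right; auto. Qed.

Lemma glue (Rel : R -> R -> Prop) :
  (forall a b c, Rel a b -> Rel b c -> Rel a c) ->
  (forall k a b, p k <= a -> a <= b -> b <= p (S k) -> Rel a b) ->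
  forall a b, 0 <= a -> a <= b -> b < 1 -> Rel a b.
Proof.
  intros Htr Hp a b Ha Hab Hb.
  destruct (piece_exists a) as [n [Hn1 Hn2]]; [lra|].
  destruct (piece_exists b) as [m [Hm1 Hm2]]; [lra|].
  destruct (Compare_dec.le_lt_dec m n).
  - destruct (Nat.eq_dec m n). subst. apply (Hp n); lra.
    assert (p (S m) <= p n) by (apply p_le; lia). lra.
  - assert (forall j, Rel a (p (S n + j))).
    { induction j. rewrite Nat.add_0_r. apply (Hp n); lra.
      apply Htr with (p (S n + j)); auto.
      replace (S n + S j)%nat with (S (S n + j)) by lia.
      apply (Hp (S n + j)%nat); [lra| left; apply p_lt | lra]. }
    apply Htr with (p m). replace m with (S n + (m - S n))%nat by lia. auto.
    apply (Hp m); lra.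
Qed.

Lemma Wk_derive k x : x < 1 -> is_derive (fun r => - Wk k r) x (gam k * Wk k x / (1 - x)).
Proof. intros Hx. unfold Wk. auto_derive. lra. unfold Rminus. field. lra. Qed.
Lemma Vk_derive k x : x < 1 -> is_derive (fun r => - Vk k r) x (Wk k x / (1 - x)).
Proof. intros Hx. unfold Vk, Wk. pose proof (gam_pos k). auto_derive. lra. unfold Rminus. field. lra. Qed.
Lemma om_cont k x : x < 1 -> continuous (fun r => gam k * Wk k r / (1 - r)) x.
Proof. intros Hx. apply (ex_derive_continuous (K:=R_AbsRing) (V:=R_NormedModule)). unfold Wk. auto_derive. lra. Qed.
Lemma tl_cont k x : x < 1 -> continuous (fun r => Wk k r / (1 - r)) x.
Proof. intros Hx. apply (ex_derive_continuous (K:=R_AbsRing) (V:=R_NormedModule)). unfold Wk. auto_derive. lra. Qed.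

Lemma om_piece k a b : p k <= a -> a <= b -> b <= p (S k) ->
  is_RInt om a b (Wf a - Wf b).
Proof.
  intros H1 H2 H3. pose proof (p_lt1 (S k)).
  rewrite (Wf_eq a k) by lra. rewrite (Wf_eq b k) by lra.
  apply is_RInt_ext with (fun r => gam k * Wk k r / (1 - r)).
  { intros x Hx. rewrite Rmin_left in Hx by lra. rewrite Rmax_right in Hx by lra.
    unfold om. rewrite (idx_int x k) by lra. unfold Wf; rewrite (idx_int x k) by lra; reflexivity. }
  replace (Wk k a - Wk k b) with (minus (- Wk k b) (- Wk k a)) by (unfold minus, plus, opp; simpl; ring).
  apply (is_RInt_derive (fun r => - Wk k r)).
  - intros x Hx. rewrite Rmin_left in Hx by lra. rewrite Rmax_right in Hx by lra. apply Wk_derive; lra.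
  - intros x Hx. rewrite Rmin_left in Hx by lra. rewrite Rmax_right in Hx by lra. apply om_cont; lra.
Qed.

Lemma tl_piece k a b : p k <= a -> a <= b -> b <= p (S k) ->
  is_RInt (tilde Wf) a b (Vf a - Vf b).
Proof.
  intros H1 H2 H3. pose proof (p_lt1 (S k)).
  rewrite (Vf_eq a k) by lra. rewrite (Vf_eq b k) by lra.
  apply is_RInt_ext with (fun r => Wk k r / (1 - r)).
  { intros x Hx. rewrite Rmin_left in Hx by lra. rewrite Rmax_right in Hx by lra.
    unfold tilde, Wf. rewrite (idx_int x k) by lra. reflexivity. }
  replace (Vk k a - Vk k b) with (minus (- Vk k b) (- Vk k a)) by (unfold minus, plus, opp; simpl; ring).
  apply (is_RInt_derive (fun r => - Vk k r)).
  - intros x Hx. rewrite Rmin_left in Hx by lra. rewrite Rmax_right in Hx by lra. apply Vk_derive; lra.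
  - intros x Hx. rewrite Rmin_left in Hx by lra. rewrite Rmax_right in Hx by lra. apply tl_cont; lra.
Qed.

Lemma om_int a b : 0 <= a -> a <= b -> b < 1 -> is_RInt om a b (Wf a - Wf b).
Proof.
  apply (glue (fun a b => is_RInt om a b (Wf a - Wf b))).
  - intros x y z H1 H2. replace (Wf x - Wf z) with (plus (Wf x - Wf y) (Wf y - Wf z)).
    exact (is_RInt_Chasles _ x y z _ _ H1 H2). unfold plus; simpl; ring.
  - intros; eapply om_piece; eauto.
Qed.
Lemma tl_int a b : 0 <= a -> a <= b -> b < 1 -> is_RInt (tilde Wf) a b (Vf a - Vf b).
Proof.
  apply (glue (fun a b => is_RInt (tilde Wf) a b (Vf a - Vf b))).
  - intros x y z H1 H2. replace (Vf x - Vf z) with (plus (Vf x - Vf y) (Vf y - Vf z)).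
    exact (is_RInt_Chasles _ x y z _ _ H1 H2). unfold plus; simpl; ring.
  - intros; eapply tl_piece; eauto.
Qed.

Lemma exp_le a b : a <= b -> exp a <= exp b.
Proof. intros H. destruct (Rle_lt_or_eq_dec _ _ H). left; apply exp_increasing; auto. subst; lra. Qed.

Lemma Wk_bounds k r : p k <= r <= p (S k) -> w (S k) <= Wk k r <= w k.
Proof.
  intros H. destruct (seq_facts k) as [[? ?] _]. pose proof (gam_pos k).
  pose proof (p_lt1 (S k)). unfold Wk. split.
  - rewrite <- Wk_right. unfold Wk. apply Rmult_le_compat_l; [lra|]. apply exp_le.
    apply Rmult_le_compat_l; [lra|]. apply Rplus_le_compat_r. apply ln_le; lra.
  - rewrite <- (Rmult_1_r (w k)) at 2. apply Rmult_le_compat_l; [lra|].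
    apply Rle_trans with (exp 0); [|rewrite exp_0; lra]. apply exp_le. rewrite <- (ln_1p k).
    assert (ln (1 - r) <= ln (1 - p k)) by (apply ln_le; lra). assert (0 <= gam k * (ln (1 - p k) - ln (1 - r))) by (apply Rmult_le_pos; lra). lra.
Qed.

Lemma Wf_pos r : 0 < Wf r.
Proof. unfold Wf, Wk. destruct (seq_facts (idx r)) as [[? ?] _].
  apply Rmult_lt_0_compat; [lra|apply exp_pos]. Qed.

Lemma W_le_V r : 0 <= r < 1 -> Wf r <= Vf r.
Proof.
  intros Hr. destruct (idx_spec r Hr) as [H1 H2]. set (k := idx r) in *.
  rewrite (Wf_eq r k) by lra. rewrite (Vf_eq r k) by lra.
  pose proof (Wk_bounds k r ltac:(lra)). unfold Vk.
  destruct (seq_facts k) as [[? ?] [[? ?] [? _]]].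
  destruct (seq_facts (S k)) as [_ [_ [? _]]].
  set (u := Wk k r) in *. set (th := (w k - u) / (w k - w (S k))).
  assert (0 <= th <= 1).
  { unfold th. split. apply Rdiv_le_0_compat; lra.
    apply Rmult_le_reg_r with (w k - w (S k)); [lra|]. unfold Rdiv.
    rewrite Rmult_assoc, Rinv_l by lra. lra. }
  assert (u = (1 - th) * w k + th * w (S k)) by (unfold th; field; lra).
  assert (HV : v k + (u - w k) / gam k = (1 - th) * v k + th * v (S k)).
  { unfold gam, th. field. lra. }
  rewrite HV. nra.
Qed.

Lemma om_nonneg r : 0 <= r < 1 -> 0 <= om r.
Proof. intros H. unfold om. pose proof (gam_pos (idx r)). pose proof (Wf_pos r).
  apply Rdiv_le_0_compat; [nra|lra]. Qed.
Lemma tl_nonneg r : 0 <= r < 1 -> 0 <= tilde Wf r.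
Proof. intros H. unfold tilde. pose proof (Wf_pos r). apply Rdiv_le_0_compat; lra. Qed.
Lemma Vf_pos r : 0 <= r < 1 -> 0 < Vf r.
Proof. intros H. pose proof (W_le_V r H). pose proof (Wf_pos r). lra. Qed.

Lemma V_mono a b : 0 <= a -> a <= b -> b < 1 -> Vf b <= Vf a.
Proof.
  intros H1 H2 H3. pose proof (tl_int a b H1 H2 H3) as HI.
  assert (0 <= RInt (tilde Wf) a b).
  { apply RInt_ge_0; auto. eexists; eauto. intros x Hx. apply tl_nonneg; lra. }
  rewrite (is_RInt_unique _ _ _ _ HI) in H. lra.
Qed.

Lemma V_bound a m : 0 <= a -> a <= m -> m < 1 -> Vf a - Vf m <= (m - a) * (Vf a / (1 - m)).
Proof.
  intros H1 H2 H3. pose proof (tl_int a m H1 H2 H3) as HI.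
  rewrite <- (is_RInt_unique _ _ _ _ HI).
  assert (RInt (tilde Wf) a m <= RInt (fun _ => Vf a / (1 - m)) a m).
  { apply RInt_le; auto. eexists; eauto. apply ex_RInt_const.
    intros x Hx. unfold tilde. pose proof (W_le_V x ltac:(lra)). pose proof (V_mono a x H1 ltac:(lra) ltac:(lra)).
    pose proof (Vf_pos a ltac:(lra)).
    apply Rle_trans with (Vf a / (1 - x)).
    apply Rmult_le_compat_r; [left; apply Rinv_0_lt_compat; lra| lra].
    apply Rmult_le_compat_l; [lra|]. apply Rinv_le_contravar; lra. }
  rewrite RInt_const in H. exact H.
Qed.

Lemma v_small eps : 0 < eps -> exists k, v k < eps.
Proof. intros He. destruct (pow_lt_1_zero (/2) ltac:(rewrite Rabs_pos_eq; lra) eps He) as [N HN].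
  exists (2 * N)%nat. rewrite v2. specialize (HN N (Nat.le_refl _)).
  rewrite Rabs_pos_eq in HN by (apply pow_le; lra). pose proof (fseq_half N). lra. Qed.

Lemma Vf_pk k : Vf (p k) = v k.
Proof. rewrite (Vf_eq (p k) k). apply Vk_left. pose proof (p_lt k); lra. Qed.

Lemma tail_small eps : 0 < eps -> exists d, 0 < d /\ forall t, 0 <= t < 1 -> 1 - d < t -> Vf t < eps.
Proof. intros He. destruct (v_small eps He) as [k Hk]. exists (dd k). split. apply dd_pos.
  intros t Ht H. pose proof (V_mono (p k) t (p_nonneg k) ltac:(unfold p in *; lra) ltac:(lra)).
  rewrite Vf_pk in H0. lra. Qed.

Lemma hat_om : hat_is om Wf.
Proof.
  intros r Hr. split.
  - intros t Ht. constructor. apply ex_RInt_Reals_0. eexists; apply om_int; lra.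
  - intros eps He. destruct (tail_small eps He) as [d [Hd Hs]]. exists d. split; auto.
    intros t pr H1 H2 H3. rewrite <- RInt_Reals. rewrite (is_RInt_unique _ _ _ _ (om_int r t ltac:(lra) H1 H2)).
    specialize (Hs t ltac:(lra) H3). pose proof (W_le_V t ltac:(lra)). pose proof (Wf_pos t).
    rewrite Rabs_left1 by lra. lra.
Qed.

Lemma hat_tl : hat_is (tilde Wf) Vf.
Proof.
  intros r Hr. split.
  - intros t Ht. constructor. apply ex_RInt_Reals_0. eexists; apply tl_int; lra.
  - intros eps He. destruct (tail_small eps He) as [d [Hd Hs]]. exists d. split; auto.
    intros t pr H1 H2 H3. rewrite <- RInt_Reals. rewrite (is_RInt_unique _ _ _ _ (tl_int r t ltac:(lra) H1 H2)).
    specialize (Hs t ltac:(lra) H3). pose proof (Vf_pos t ltac:(lra)).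
    rewrite Rabs_left1 by lra. lra.
Qed.

Lemma Dhat_V : Dhat Vf.
Proof.
  exists 3. split; [lra|]. intros r Hr.
  set (m := (1 + 3 * r) / 4). set (h := (1 + r) / 2).
  pose proof (V_bound r m ltac:(lra) ltac:(unfold m; lra) ltac:(unfold m; lra)) as B1.
  pose proof (V_bound m h ltac:(unfold m; lra) ltac:(unfold m, h; lra) ltac:(unfold h; lra)) as B2.
  replace ((m - r) * (Vf r / (1 - m))) with (Vf r / 3) in B1 by (unfold m; field; lra).
  replace ((h - m) * (Vf m / (1 - h))) with (Vf m / 2) in B2 by (unfold m, h; field; lra).
  lra.
Qed.

Lemma not_Dhat_W : ~ Dhat Wf.
Proof.
  intros [C [HC HD]].
  assert (Hl : 0 < ln 2) by (pose proof ln_lt_2; lra).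
  destruct (INR_unbounded (C / ln 2 * 4 / 3)) as [n Hn].
  set (k := (2 * n)%nat). set (r := p k).
  assert (Hr : 0 <= r < 1) by (split; [apply p_nonneg| apply p_lt1]).
  specialize (HD r Hr).
  assert (Hh : p k <= (1 + r) / 2 <= p (S k)).
  { pose proof (dd_step k). pose proof (dd_pos k). unfold r, p in *. lra. }
  rewrite (Wf_eq r k) in HD by (pose proof (p_lt k); unfold r; lra).
  rewrite (Wf_eq _ k Hh) in HD. unfold r in HD. rewrite Wk_left in HD.
  unfold Wk in HD.
  replace (ln (1 - (1 + p k) / 2)) with (lam k - ln 2) in HD.
  2:{ replace (1 - (1 + p k) / 2) with (dd k / 2) by (unfold p; field).
      rewrite ln_div by (try apply dd_pos; lra). unfold dd. rewrite ln_exp. reflexivity. }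
  replace (gam k * (lam k - ln 2 - lam k)) with (- (gam k * ln 2)) in HD by ring.
  rewrite exp_Ropp in HD.
  pose proof (gam_even n) as G. fold k in G.
  assert (C < gam k * ln 2).
  { pose proof (pos_INR n).
    assert (C / ln 2 < gam k) by lra.
    apply Rmult_lt_reg_r with (/ ln 2). apply Rinv_0_lt_compat; lra.
    rewrite Rmult_assoc, Rinv_r by lra. lra. }
  pose proof (exp_ineq1 (gam k * ln 2) ltac:(lra)).
  destruct (seq_facts k) as [[? ?] _].
  assert (w k * exp (gam k * ln 2) <= C * w k).
  { apply Rmult_le_reg_r with (/ exp (gam k * ln 2)). apply Rinv_0_lt_compat, exp_pos.
    rewrite Rmult_assoc, Rinv_r by (apply Rgt_not_eq, exp_pos). lra. }
  nra.
Qed.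

Theorem theorem3 :
  exists omega Womega Wtilde : R -> R,
    radial_weight omega Womega /\ ~ Dhat Womega /\
    radial_weight (tilde Womega) Wtilde /\ Dhat Wtilde.
Proof.
  exists om, Wf, Vf. split; [|split; [|split]].
  - split; [apply om_nonneg|split; [apply hat_om|]]. intros r _; apply Wf_pos.
  - apply not_Dhat_W.
  - split; [apply tl_nonneg|split; [apply hat_tl|]]. apply Vf_pos.
  - apply Dhat_V.
Qed.
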